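(* Let $M$ be a finite rectangular monoid, $k$ a splitting field for $M$, and $X,Y\in\Lambda(M)$ with $X\le Y$. Let $U,V$ be simple $kG_X$-, $kG_Y$-modules, respectively (viewed as simple modules for $kM$, $kM_\ell$ and $kM_r$). Then the number of arrows from $U$ to $V$ in $Q(kM)$ equals the number of arrows from $U$ to $V$ in $Q(kM_\ell)$, and the number of arrows from $V$ to $U$ in $Q(kM)$ equals the number of arrows from $V$ to $U$ in $Q(kM_r)$.
   Context: $M$ finite monoid, $E(M)$ its idempotents, $m^\omega$ the idempotent power of $m$. $M$ is rectangular if each set $\{f\in E(M): MfM=MeM\}$ is closed under multiplication. $\Lambda(M)$: ideals $MeM$, $e\in E(M)$, ordered by inclusion; $\sigma(m)=Mm^\omega M$. Fix $e_X$ with $Me_XM=X$; $G_X$ is the group of units of $e_XMe_X$; a $kG_X$-module is a $kM$-module via $m\mapsto e_Xme_X$ if $\sigma(m)\supseteq X$ and $m\mapsto 0$ otherwise. A two-element right (resp. left) zero subsemigroup is $\{e,f\}$, $e\ne f$, with $ef=f,fe=e$ (resp. $ef=e,fe=f$). $M_\ell$ (resp. $M_r$) is the quotient of $M$ by the smallest congruence identifying the two elements of each two-element right (resp. left) zero subsemigroup; the map $m\mapsto(\sigma(m),\rho_{\sigma(m)}(m))$ to the associated Clifford monoid factors through $M_\ell$ and $M_r$, so $M,M_\ell,M_r$ have the same simple modules (those inflated from the $G_X$). $k$ splits $M$ if $kM/\mathrm{rad}(kM)$ is a product of matrix algebras over $k$. Quiver: $\dim\mathrm{Ext}^1(S,T)$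 arrows $S\to T$. *)

(* Defs.v *)
From HB Require Import structures.
From mathcomp Require Import all_boot all_order all_algebra.
Set Implicit Arguments.
Unset Strict Implicit.
Unset Printing Implicit Defensive.
Import GRing.Theory.
Local Open Scope ring_scope.

Section MonoidDefs.
Variables (M : finType) (mul : M -> M -> M) (one : M).

Definition is_monoid : Prop :=
  [/\ associative mul, left_id one mul & right_id one mul].

Definition idem (e : M) : bool := mul e e == e.

Definition mpow (m : M) (n : nat) : M := iter n (mul m) one.

(* m^omega: the idempotent power m^(|M|!) (|M|! is a multiple of the period
   and at least the index of m). *)
Definition omega (m : M) : M := mpow m (#|M|`!).

Definition ideal (e : M) : {set M} := [set mul (mul a e) b | a : M, b : M].

Definition rectangular : Prop :=
  forall e f g, idem e -> idem f -> idem g ->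
    ideal f = ideal e -> ideal g = ideal e ->
    idem (mul f g) /\ ideal (mul f g) = ideal e.

Definition sigma (m : M) : {set M} := ideal (omega m).

Definition corner (e : M) : {set M} := [set mul (mul e m) e | m : M].
Definition GX (e : M) : {set M} :=
  [set g in corner e | [exists h in corner e, (mul g h == e) && (mul h g == e)]].

Variable k : fieldType.

(* a (matrix) representation of the group G_X, X = M e M, on k^n (column
   vectors, left action); only its values on G_X matter *)
Definition is_grep (e : M) n (rho : M -> 'M[k]_n) : Prop :=
  rho e = 1%:M /\ {in GX e &, forall g h, rho (mul g h) = rho g *m rho h}.

(* simplicity of the kG_X-module: nonzero, no proper nonzero invariant
   subspace (subspaces of column space encoded by row spaces of transposes) *)
Definition grep_irr (e : M) n (rho : M -> 'M[k]_n) : Prop :=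
  (0 < n)%N /\
  forall U : 'M[k]_n, (forall g, g \in GX e -> (U *m (rho g)^T <= U)%MS) ->
    (U == (0 : 'M[k]_n))%MS \/ row_full U.

Definition infl (e : M) n (rho : M -> 'M[k]_n) (m : M) : 'M[k]_n :=
  if ideal e \subset sigma m then rho (mul (mul e m) e) else 0.

End MonoidDefs.

Section Reps.
Variables (T : finType) (mul : T -> T -> T) (one : T) (k : fieldType).

Definition is_mrep n (rho : T -> 'M[k]_n) : Prop :=
  rho one = 1%:M /\ forall a b, rho (mul a b) = rho a *m rho b.

Definition mrep_irr n (rho : T -> 'M[k]_n) : Prop :=
  (0 < n)%N /\
  forall U : 'M[k]_n, (forall m, (U *m (rho m)^T <= U)%MS) ->
    (U == (0 : 'M[k]_n))%MS \/ row_full U.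

(* k splits the monoid: every simple kM-module S has End_kM(S) = k, i.e.
   (Burnside/Wedderburn) the image of kM in End_k(S) is all of End_k(S);
   equivalently kM/rad(kM) is a product of matrix algebras over k. *)
Definition splits : Prop :=
  forall n (rho : T -> 'M[k]_n), is_mrep rho -> mrep_irr rho ->
    row_full (\sum_(m : T) <<mxvec (rho m)>>)%MS.

(* dim Ext^1(S,T) = number of arrows S -> T in the quiver, computed as
   derivations modulo inner derivations: an extension 0 -> T -> E -> S -> 0
   is m |-> [[rT m, d m],[0, rS m]] with d(ab) = rT a d b + d a rS b. *)
Section Ext.
Variables (p q : nat) (rS : T -> 'M[k]_q) (rT : T -> 'M[k]_p).

Definition der_defect (d : {ffun T -> 'M[k]_(p, q)}) : {ffun T * T -> 'M[k]_(p, q)} :=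
  [ffun x => d (mul x.1 x.2) - (rT x.1 *m d x.2 + d x.1 *m rS x.2)].

Definition inner_der (f : 'M[k]_(p, q)) : {ffun T -> 'M[k]_(p, q)} :=
  [ffun m => rT m *m f - f *m rS m].

Definition ext1_dim : nat :=
  (\dim (lker (linfun der_defect)) - \dim (limg (linfun inner_der)))%N.
End Ext.
End Reps.

Section Quotient.
Variables (M : finType) (mul : M -> M -> M) (one : M).

Definition is_congr (C : {set M * M}) : bool :=
  [&& [forall x, (x, x) \in C],
      [forall x, forall y, ((x, y) \in C) ==> ((y, x) \in C)],
      [forall x, forall y, forall z, ((x, y) \in C) && ((y, z) \in C) ==> ((x, z) \in C)]
    & [forall x, forall y, forall z, ((x, y) \in C) ==>
          ((mul z x, mul z y) \in C) && ((mul x z, mul y z) \in C)]].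

Definition congr_gen (R : {set M * M}) : {set M * M} :=
  \bigcap_(C | is_congr C && (R \subset C)) C.

Definition rz_pairs : {set M * M} :=
  [set x | [&& x.1 != x.2, mul x.1 x.2 == x.2 & mul x.2 x.1 == x.1]].
Definition lz_pairs : {set M * M} :=
  [set x | [&& x.1 != x.2, mul x.1 x.2 == x.1 & mul x.2 x.1 == x.2]].

Variable C : {set M * M}.
Definition cls (x : M) : {set M} := [set y | (x, y) \in C].
Definition quot := {A : {set M} | A \in [set cls x | x in [set: M]]}.
Definition qmk (x : M) : quot := exist _ (cls x) (imset_f _ (in_setT x)).
Definition qrepr (A : quot) : M := odflt one [pick x in val A].
Definition qmul (A B : quot) : quot := qmk (mul (qrepr A) (qrepr B)).
Definition qone : quot := qmk one.
End Quotient.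

Definition Cl M mul := congr_gen mul (@rz_pairs M mul).
Definition Cr M mul := congr_gen mul (@lz_pairs M mul).
Arguments qmul {M} mul one C.
Arguments qrepr {M} one C.
Arguments qmk {M} C x.
Arguments qone {M} one C.

(* Main.v *)
From HB Require Import structures.
Require Import Defs.
From mathcomp Require Import all_boot all_order all_algebra.
From Stdlib Require Import Classical.
Set Implicit Arguments.
Unset Strict Implicit.
Unset Printing Implicit Defensive.

Section Mon.
Variables (M : finType) (mul : M -> M -> M) (one : M).
Hypothesis Hmon : is_monoid mul one.
Local Notation "x |*| y" := (mul x y) (at level 40, left associativity).

Lemma mA : associative mul. Proof. by case: Hmon. Qed.
Lemma m1l : left_id one mul. Proof. by case: Hmon. Qed.
Lemma m1r : right_id one mul. Proof. by case: Hmon. Qed.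

Lemma mpowS x n : mpow mul one x n.+1 = x |*| mpow mul one x n. Proof. by []. Qed.
Lemma mpow0 x : mpow mul one x 0 = one. Proof. by []. Qed.
Lemma mpow1 x : mpow mul one x 1 = x. Proof. by rewrite mpowS mpow0 m1r. Qed.

Lemma mpowD x m n : mpow mul one x (m + n) = mpow mul one x m |*| mpow mul one x n.
Proof.
elim: m => [|m IH]; first by rewrite add0n mpow0 m1l.
by rewrite addSn !mpowS IH mA.
Qed.

Lemma mpowSr x n : mpow mul one x n.+1 = mpow mul one x n |*| x.
Proof. by rewrite -addn1 mpowD mpow1. Qed.

Lemma mpow_idem e n : e |*| e = e -> mpow mul one e n.+1 = e.
Proof. move=> He; elim: n => [|n IH]; first by rewrite mpow1.
by rewrite mpowS IH He. Qed.

Lemma mpow_one n : mpow mul one one n = one.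
Proof. elim: n => [|n IH] //; by rewrite mpowS IH m1l. Qed.

Lemma pigeon x : exists i j, [/\ (i < j)%N, (j <= #|M|)%N & mpow mul one x i = mpow mul one x j].
Proof.
apply: NNPP => H.
have inj : injective (fun i : 'I_(#|M|.+1) => mpow mul one x i).
  move=> i j Hij; apply: val_inj.
  case: (ltngtP i j) => [lt|gt|eq] //.
  - exfalso; apply: H; exists i, j; split => //. by rewrite -ltnS.
  - exfalso; apply: H; exists j, i; split => //. by rewrite -ltnS.
have := leq_card _ inj. by rewrite card_ord ltnn.
Qed.

Definition N := (#|M|`!)%N.

Lemma N_gt0 : (0 < N)%N. Proof. exact: fact_gt0. Qed.

Lemma omega_idem x : omega mul one x |*| omega mul one x = omega mul one x.
Proof.
have [i [j [ij jM eq]]] := pigeon x.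
set p := (j - i)%N.
have per : forall m, (i <= m)%N -> mpow mul one x (m + p) = mpow mul one x m.
  move=> m im; rewrite -(subnK im) -addnA /p (addnC i) (subnK (ltnW ij)) mpowD -eq -mpowD //.
have perk : forall k m, (i <= m)%N -> mpow mul one x (m + k * p) = mpow mul one x m.
  elim=> [|k IH] m im; first by rewrite mul0n addn0.
  by rewrite mulSn addnA IH ?per // (leq_trans im) ?leq_addr.
have p0 : (0 < p)%N by rewrite subn_gt0.
have pM : (p <= #|M|)%N by rewrite (leq_trans (leq_subr _ _)).
have dp : (p %| N)%N by apply: dvdn_fact; rewrite p0.
have iN : (i <= N)%N.
  apply: (leq_trans (ltnW (leq_trans ij jM))).
  exact: fact_geq.
rewrite /omega -mpowD -/N.
by rewrite -{2}(divnK dp) perk.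
Qed.

Lemma omegaE x : omega mul one x = x |*| mpow mul one x N.-1.
Proof. by rewrite /omega -/N -mpowS prednK // N_gt0. Qed.

Lemma omegaEr x : omega mul one x = mpow mul one x N.-1 |*| x.
Proof. by rewrite /omega -/N -mpowSr prednK // N_gt0. Qed.

Lemma omega_of_idem e : e |*| e = e -> omega mul one e = e.
Proof. by move=> He; rewrite /omega -/N -(prednK N_gt0) mpow_idem. Qed.

Lemma omega_one : omega mul one one = one.
Proof. by rewrite /omega mpow_one. Qed.

Lemma inIP x y : reflect (exists a b, x = a |*| y |*| b) (x \in ideal mul y).
Proof.
apply: (iffP imset2P) => [[a b _ _ ->]|[a [b ->]]]; first by exists a, b.
by exists a b.
Qed.

Lemma inI_refl x : x \in ideal mul x.
Proof. by apply/inIP; exists one, one; rewrite m1l m1r. Qed.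

Lemma inI_trans x y z : x \in ideal mul y -> y \in ideal mul z -> x \in ideal mul z.
Proof.
move=> /inIP[a [b ->]] /inIP[c [d ->]]; apply/inIP; exists (a |*| c), (d |*| b).
by rewrite !mA.
Qed.

Lemma subI x y : (ideal mul x \subset ideal mul y) = (x \in ideal mul y).
Proof.
apply/subsetP/idP => [H|H z Hz]; first by apply: H; apply: inI_refl.
exact: inI_trans Hz H.
Qed.

Lemma eqI x y : (ideal mul x = ideal mul y) <-> (x \in ideal mul y /\ y \in ideal mul x).
Proof.
split=> [E|[H1 H2]]; first by split; [rewrite -E | rewrite E]; apply: inI_refl.
by apply/eqP; rewrite eqEsubset !subI H1 H2.
Qed.

Lemma omega_idemN x : mpow mul one x N |*| mpow mul one x N = mpow mul one x N.
Proof. exact: omega_idem. Qed.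

Lemma pow_sandwich u x w n : x = u |*| x |*| w ->
  x = mpow mul one u n |*| x |*| mpow mul one w n.
Proof.
move=> H; elim: n => [|n IH]; first by rewrite !mpow0 m1l m1r.
rewrite mpowS mpowSr.
have -> : u |*| mpow mul one u n |*| x |*| (mpow mul one w n |*| w) =
  u |*| (mpow mul one u n |*| x |*| mpow mul one w n) |*| w by rewrite !mA.
by rewrite -IH.
Qed.

Lemma right_stab x y : x \in ideal mul (x |*| y) -> exists z, x = x |*| y |*| z.
Proof.
move=> /inIP[u [v H]].
have H1 : x = u |*| x |*| (y |*| v) by rewrite {1}H !mA.
have H2 := pow_sandwich N H1.
have H3 : x = x |*| omega mul one (y |*| v).
  by rewrite /omega -/N {2}H2 -mA omega_idemN -H2.
exists (v |*| mpow mul one (y |*| v) N.-1).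
by rewrite {1}H3 omegaE !mA.
Qed.

Lemma left_stab x y : x \in ideal mul (y |*| x) -> exists z, x = z |*| (y |*| x).
Proof.
move=> /inIP[u [v H]].
have H1 : x = (u |*| y) |*| x |*| v by rewrite {1}H !mA.
have H2 := pow_sandwich N H1.
have H3 : x = omega mul one (u |*| y) |*| x.
  by rewrite /omega -/N {2}H2 !mA omega_idemN -H2.
exists (mpow mul one (u |*| y) N.-1 |*| u).
by rewrite {1}H3 omegaEr !mA.
Qed.


Lemma inI_mulr x y z : x \in ideal mul y -> x |*| z \in ideal mul y.
Proof. move=> /inIP[a [b ->]]; apply/inIP; exists a, (b |*| z); by rewrite !mA. Qed.
Lemma inI_mull x y z : x \in ideal mul y -> z |*| x \in ideal mul y.
Proof. move=> /inIP[a [b ->]]; apply/inIP; exists (z |*| a), b; by rewrite !mA. Qed.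
Lemma inI_mid a x b : a |*| x |*| b \in ideal mul x.
Proof. by apply/inIP; exists a, b. Qed.

Hypothesis Hrect : rectangular mul.
Variable e : M.
Hypothesis Hei : idem mul e.

Lemma He : e |*| e = e. Proof. exact/eqP. Qed.
Lemma eeR a : a |*| e |*| e = a |*| e. Proof. by rewrite -mA He. Qed.

Definition EJ f := f |*| f = f /\ ideal mul f = ideal mul e.

Lemma EJe : EJ e. Proof. by split; [exact: He|]. Qed.

Lemma EJ_mul f g : EJ f -> EJ g -> EJ (f |*| g).
Proof.
move=> [Hf If] [Hg Ig].
have [/eqP ? ?] := Hrect Hei (introT eqP Hf) (introT eqP Hg) If Ig.
by split.
Qed.

Lemma EJ_xyx f g : EJ f -> EJ g -> f |*| g |*| f = f.
Proof.
move=> Ef Eg.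
have [Hh Ih] := EJ_mul (EJ_mul Ef Eg) Ef.
have [Hf If] := Ef.
have : f \in ideal mul (f |*| g |*| f).
  by rewrite Ih -If; apply: inI_refl.
move/left_stab => [z Hz].
have E1 : f |*| (f |*| g |*| f) = f |*| g |*| f by rewrite !mA Hf.
have E2 : f |*| (f |*| g |*| f) = f.
  by rewrite {1}Hz -mA Hh -Hz.
by rewrite -E1 E2.
Qed.

Lemma EJ_rect f g k : EJ f -> EJ g -> EJ k -> f |*| g |*| k = f |*| k.
Proof.
move=> Ef Eg Ek.
have E : f |*| g |*| k = (f |*| k |*| f) |*| g |*| (k |*| f |*| k).
  by rewrite (EJ_xyx Ef Ek) (EJ_xyx Ek Ef).
move: (EJ_xyx (EJ_mul Ef Ek) (EJ_mul (EJ_mul Ef Eg) Ek)) => H.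
rewrite E; rewrite !mA in H *; exact: H.
Qed.

Lemma lemR x y : e |*| x |*| y |*| e = e -> e |*| x |*| e |*| y |*| e = e.
Proof.
move=> H.
pose F := y |*| e |*| x.
have FF : F |*| F = F.
  have := congr1 (fun t => y |*| t |*| x) H; by rewrite /F !mA.
have IF : ideal mul F = ideal mul e.
  apply/eqI; split; first exact: inI_mid.
  apply/inIP; exists (e |*| x), (y |*| e); by rewrite /F !mA !H.
have EF : EJ F by [].
have exF : e |*| x |*| F = e |*| x by rewrite /F !mA H.
have Fye : F |*| y |*| e = y |*| e.
  have := congr1 (mul y) H; by rewrite /F !mA.
clearbody F.
have FeF a : a |*| F |*| e |*| F = a |*| F.
  by have := congr1 (mul a) (EJ_xyx EF EJe); rewrite !mA.
have -> : e |*| x |*| e |*| y |*| e = (e |*| x |*| F) |*| e |*| (F |*| y |*| e)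
  by rewrite exF Fye !mA.
by rewrite !mA FeF exF H.
Qed.

Lemma C1 g : g |*| g = g -> e \in ideal mul g -> e |*| g |*| e = e.
Proof.
move=> Hg /inIP[u [v Hev]].
pose s := e |*| u |*| g. pose t := g |*| v |*| e.
have Est : s |*| t = e.
  have -> : s |*| t = e |*| (u |*| (g |*| g) |*| v) |*| e by rewrite /s /t !mA.
  by rewrite Hg -Hev !He.
have te : t |*| e = t by rewrite /t -mA He.
have es : e |*| s = s by rewrite /s !mA He.
have gt : g |*| t = t by rewrite /t !mA Hg.
have sI : s \in ideal mul e by apply/inIP; exists one, (u |*| g); rewrite /s m1l mA.
clearbody s t.
pose f := t |*| s.
have EF : EJ f.
  split.
    have -> : f |*| f = t |*| (s |*| t) |*| s by rewrite /f !mA.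
    by rewrite Est te.
  apply/eqI; split; first by rewrite /f; exact: inI_mull.
  apply/inIP; exists s, t.
  have -> : s |*| f |*| t = (s |*| t) |*| (s |*| t) by rewrite /f !mA.
  by rewrite Est He.
have gf : g |*| f = f by rewrite /f mA gt.
have efe := EJ_xyx EJe EF.
clearbody f.
have EG : EJ (f |*| e |*| g).
  split.
    have -> : f |*| e |*| g |*| (f |*| e |*| g) = f |*| e |*| (g |*| f) |*| e |*| g by rewrite !mA.
    by rewrite gf (EJ_xyx EF EJe).
  apply/eqI; split; first exact: inI_mid.
  apply/inIP; exists e, (f |*| e).
  have -> : e |*| (f |*| e |*| g) |*| (f |*| e) = e |*| f |*| e |*| (g |*| f) |*| e by rewrite !mA.
  by rewrite gf efe efe.
have -> : e |*| g |*| e = e |*| (f |*| e |*| g) |*| e.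
  by rewrite !mA efe.
exact: EJ_xyx EJe EG.
Qed.

Lemma dedekind a b : a |*| e = a -> e |*| b = b -> b |*| e = b -> a |*| b = e ->
  b |*| a = e.
Proof.
move=> ae eb be ab.
have kk : b |*| a |*| (b |*| a) = b |*| a.
  by rewrite mA -(mA b a b) ab be.
have : e \in ideal mul (e |*| (b |*| a)).
  rewrite mA eb; apply/inIP; exists a, b.
  have -> : a |*| (b |*| a) |*| b = (a |*| b) |*| (a |*| b) by rewrite !mA.
  by rewrite ab He.
move/right_stab => [z Hz].
rewrite mA eb in Hz.
have ke : b |*| a |*| e = b |*| a by rewrite -mA ae.
by rewrite -ke {1}Hz mA kk -Hz.
Qed.

Lemma GXI g h : e |*| g = g -> g |*| e = g -> e |*| h = h -> h |*| e = h ->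
  g |*| h = e -> h |*| g = e -> g \in GX mul e.
Proof.
move=> eg ge eh he gh hg.
have cor x : e |*| x = x -> x |*| e = x -> x \in corner mul e.
  move=> ex xe; apply/imsetP; exists x => //. by rewrite ex xe.
rewrite inE cor //=; apply/existsP; exists h; by rewrite cor //= gh hg !eqxx.
Qed.

Lemma GXE g : g \in GX mul e -> exists h,
  [/\ e |*| g = g, g |*| e = g, e |*| h = h, h |*| e = h & g |*| h = e /\ h |*| g = e].
Proof.
have cor x : x \in corner mul e -> e |*| x = x /\ x |*| e = x.
  move=> /imsetP[m _ ->]; split; [by rewrite !mA He | by rewrite -mA He].
rewrite inE => /andP[/cor[eg ge] /existsP[h /andP[/cor[eh he] /andP[/eqP gh /eqP hg]]]].
by exists h.
Qed.

Definition good x := e |*| x |*| e \in GX mul e.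

Lemma C3 x y : good x -> good y ->
  e |*| (x |*| y) |*| e = (e |*| x |*| e) |*| (e |*| y |*| e) /\ good (x |*| y).
Proof.
move=> /GXE[hx [_ _ ehx hxe [gx xg]]] /GXE[hy [_ _ ehy hye [gy yg]]].
have exhx : e |*| x |*| hx = e by rewrite -{1}ehx mA gx.
pose F := hx |*| e |*| x.
have EF : EJ F.
  split.
    have -> : F |*| F = hx |*| (e |*| x |*| hx) |*| e |*| x by rewrite /F !mA.
    by rewrite exhx -(mA hx e e) He.
  apply/eqI; split; first exact: inI_mid.
  apply/inIP; exists one, e; rewrite m1l /F.
  by move: xg; rewrite !mA.
have exF : e |*| x |*| F = e |*| x.
  by rewrite /F !mA exhx He.
have hyye : hy |*| y |*| e = e by rewrite -{1}hye; move: yg; rewrite !mA.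
pose F' := y |*| e |*| hy.
have EF' : EJ F'.
  split.
    have -> : F' |*| F' = y |*| e |*| (hy |*| y |*| e) |*| hy by rewrite /F' !mA.
    by rewrite hyye eeR.
  apply/eqI; split; first exact: inI_mid.
  apply/inIP; exists e, one; rewrite m1r /F'.
  by move: gy; rewrite !mA.
have F'ye : F' |*| y |*| e = y |*| e.
  have := congr1 (fun t => y |*| e |*| t) hyye; rewrite /F' !mA => ->; by rewrite -mA He.
clearbody F F'.
have key : e |*| x |*| e |*| y |*| e = e |*| x |*| y |*| e.
  have -> : e |*| x |*| e |*| y |*| e = (e |*| x |*| F) |*| e |*| (F' |*| y |*| e)
    by rewrite exF F'ye !mA.
  have -> : (e |*| x |*| F) |*| e |*| (F' |*| y |*| e) =
            e |*| x |*| (F |*| e |*| F') |*| y |*| e by rewrite !mA.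
  rewrite (EJ_rect EF EJe EF').
  have -> : e |*| x |*| (F |*| F') |*| y |*| e = (e |*| x |*| F) |*| (F' |*| y |*| e)
    by rewrite !mA.
  by rewrite exF F'ye !mA.
have E : e |*| (x |*| y) |*| e = e |*| x |*| e |*| (e |*| y |*| e).
  by rewrite !mA eeR key.
split => //.
rewrite /good E.
apply: (@GXI _ (hy |*| hx)).
- by rewrite !mA ?eeR ?He ?eeR.
- by rewrite !mA ?eeR ?He ?eeR.
- by rewrite mA ehy.
- by rewrite -mA hxe.
- have -> : e |*| x |*| e |*| (e |*| y |*| e) |*| (hy |*| hx) =
            e |*| x |*| e |*| (e |*| y |*| e |*| hy) |*| hx by rewrite !mA.
  rewrite gy.
  by rewrite eeR.
- have -> : hy |*| hx |*| (e |*| x |*| e |*| (e |*| y |*| e)) =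
            hy |*| (hx |*| (e |*| x |*| e)) |*| (e |*| y |*| e) by rewrite !mA.
  by rewrite xg hye.
Qed.

Lemma rAss a b c d : b |*| c = d -> a |*| b |*| c = a |*| d.
Proof. by rewrite -mA => ->. Qed.

Lemma GX_e_unit a b : a |*| b = e -> b |*| a = e -> e |*| a = a -> a |*| e = a ->
  e |*| b = b -> b |*| e = b -> a \in GX mul e.
Proof. by move=> ab ba ea ae eb be; apply: (@GXI _ b). Qed.

Lemma C4 x y : good (x |*| y) -> good x /\ good y.
Proof.
move=> /GXE[h [eg ge eh he [gh hg]]].
split.
- have H1 : e |*| x |*| (y |*| e |*| h) |*| e = e.
    rewrite !mA (rAss _ he); move: gh; by rewrite !mA.
  have H2 := lemR H1.
  set b := e |*| (y |*| e |*| h) |*| e.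
  have ab : e |*| x |*| e |*| b = e by move: H2; rewrite /b !mA eeR.
  have ae : e |*| x |*| e |*| e = e |*| x |*| e by rewrite eeR.
  have eb : e |*| b = b by rewrite /b !mA He.
  have be : b |*| e = b by rewrite /b eeR.
  have ba := dedekind ae eb be ab.
  apply: (GX_e_unit ab ba) => //; by rewrite !mA He.
- have H1 : e |*| (h |*| e |*| x) |*| y |*| e = e.
    rewrite !mA eh; move: hg; by rewrite !mA.
  have H2 := lemR H1.
  set a := e |*| (h |*| e |*| x) |*| e.
  have ab : a |*| (e |*| y |*| e) = e by move: H2; rewrite /a !mA eeR.
  have ae : a |*| e = a by rewrite /a eeR.
  have eb : e |*| (e |*| y |*| e) = e |*| y |*| e by rewrite !mA He.
  have be : e |*| y |*| e |*| e = e |*| y |*| e by rewrite eeR.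
  have ba := dedekind ae eb be ab.
  apply: (GX_e_unit ba ab) => //; by rewrite /a !mA He.
Qed.

Definition cc x := ideal mul e \subset sigma mul one x.

Lemma good_pow x n : good x -> good (mpow mul one x n.+1).
Proof.
move=> gx; elim: n => [|n IH]; first by rewrite mpow1.
by rewrite mpowS; case: (C3 gx IH).
Qed.

Lemma cc_good x : cc x = good x.
Proof.
rewrite /cc /sigma subI.
apply/idP/idP => [H|gx].
- have Hg := omega_idem x.
  have H1 := C1 Hg H.
  have Ha : e |*| x |*| (mpow mul one x N.-1) |*| e = e.
    by move: H1; rewrite omegaE !mA.
  have Hb : e |*| (mpow mul one x N.-1) |*| x |*| e = e.
    by move: H1; rewrite omegaEr !mA.
  have ab := lemR Ha.
  have ba := lemR Hb.
  apply: (@GX_e_unit _ (e |*| mpow mul one x N.-1 |*| e)).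
  + by move: ab; rewrite !mA eeR.
  + by move: ba; rewrite !mA eeR.
  + by rewrite !mA He.
  + by rewrite eeR.
  + by rewrite !mA He.
  + by rewrite eeR.
- have : good (omega mul one x).
    by rewrite /omega -/N -(prednK N_gt0); apply: good_pow.
  move=> /GXE[h [_ _ eh _ [gh _]]].
  apply/inIP; exists e, h.
  by rewrite -{1}gh -!mA eh mA.
Qed.

Variable k : fieldType.
Local Open Scope ring_scope.

Lemma infl_ccE n (rho : M -> 'M[k]_n) x :
  infl mul one e rho x = if good x then rho (e |*| x |*| e) else 0.
Proof. by rewrite /infl -/(cc x) cc_good. Qed.

Lemma infl_mul n (rho : M -> 'M[k]_n) : is_grep mul e rho ->
  forall x y, infl mul one e rho (x |*| y) = infl mul one e rho x *m infl mul one e rho y.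
Proof.
move=> [r1 rM] x y; rewrite !infl_ccE.
case gx: (good x); case gy: (good y).
- have [E gxy] := C3 gx gy.
  by rewrite gxy E rM.
- case gxy: (good (x |*| y)); last by rewrite mulmx0.
  by have [_] := C4 gxy; rewrite gy.
- case gxy: (good (x |*| y)); last by rewrite mul0mx.
  by have [] := C4 gxy; rewrite gx.
- case gxy: (good (x |*| y)); last by rewrite mul0mx.
  by have [] := C4 gxy; rewrite gx.
Qed.

Lemma good_one : good one.
Proof. by rewrite /good m1r He; apply: (@GX_e_unit _ e); rewrite ?He. Qed.

Lemma infl_one n (rho : M -> 'M[k]_n) : is_grep mul e rho ->
  infl mul one e rho one = 1%:M.
Proof. by move=> [r1 _]; rewrite infl_ccE good_one m1r He. Qed.

Lemma infl_idem n (rho : M -> 'M[k]_n) a : is_grep mul e rho -> a |*| a = a ->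
  infl mul one e rho a = if e \in ideal mul a then 1%:M else 0.
Proof.
move=> [r1 _] Ha; rewrite /infl /sigma omega_of_idem // subI.
by case: ifP => // H; rewrite C1.
Qed.

End Mon.

Import GRing.Theory.
Local Open Scope ring_scope.

Section Lin.
Variable k : fieldType.

Lemma linfunE' (aT rT : vectType k) (f : aT -> rT) : linear f -> forall u, linfun f u = f u.
Proof.
move=> lin u; pose fM := GRing.isLinear.Build _ _ _ _ f lin.
pose fL : {linear _ -> _} := HB.pack f fM.
exact: (lfunE fL).
Qed.

Lemma lin_aux (V : lmodType k) (a : k) (x y p q r s : V) :
  a *: x + y - (a *: p + q + (a *: r + s)) = a *: (x - (p + r)) + (y - (q + s)).
Proof.
rewrite scalerBr scalerDr.
rewrite [RHS]addrACA -opprD [X in _ = _ - X]addrACA.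
done.
Qed.

Lemma lin_aux2 (V : lmodType k) (a : k) (x y p q : V) :
  a *: x + y - (a *: p + q) = a *: (x - p) + (y - q).
Proof. by rewrite scalerBr [RHS]addrACA -opprD. Qed.

Variables (T : finType) (mul : T -> T -> T) (p q : nat)
  (rS : T -> 'M[k]_q) (rT : T -> 'M[k]_p).

Lemma dd_lin : linear (der_defect mul rS rT).
Proof.
move=> a u v; apply/ffunP => x; rewrite !ffunE.
by rewrite !mulmxDr !mulmxDl -!scalemxAl -!scalemxAr lin_aux.
Qed.

Lemma id_lin : linear (inner_der rS rT).
Proof.
move=> a u v; apply/ffunP => x; rewrite !ffunE.
by rewrite !mulmxDr !mulmxDl -!scalemxAl -!scalemxAr lin_aux2.
Qed.

Definition isder (d : {ffun T -> 'M[k]_(p, q)}) :=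
  forall a b, d (mul a b) = rT a *m d b + d a *m rS b.

Lemma in_lkerP d : reflect (isder d) (d \in lker (linfun (der_defect mul rS rT))).
Proof.
rewrite memv_ker linfunE'; last exact: dd_lin.
apply: (iffP eqP) => [H a b|H].
  have := congr1 (fun f : {ffun T * T -> 'M[k]_(p, q)} => f (a, b)) H.
  by rewrite !ffunE /= => /eqP; rewrite subr_eq0 => /eqP.
by apply/ffunP => x; rewrite !ffunE H subrr.
Qed.

End Lin.

Section Transport.
Variable k : fieldType.
Variables (T T' : finType) (mul : T -> T -> T) (mul' : T' -> T' -> T')
  (pi : T -> T') (sg : T' -> T) (p q : nat)
  (rS : T -> 'M[k]_q) (rT : T -> 'M[k]_p).
Hypothesis H1 : forall A, pi (sg A) = A.
Hypothesis H2 : forall a b, mul' (pi a) (pi b) = pi (mul a b).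
Hypothesis HS : forall x, rS (sg (pi x)) = rS x.
Hypothesis HT : forall x, rT (sg (pi x)) = rT x.
Hypothesis HD : forall d, isder mul rS rT d -> forall x, d (sg (pi x)) = d x.

Let Phi_f (d : {ffun T' -> 'M[k]_(p, q)}) : {ffun T -> 'M[k]_(p, q)} :=
  [ffun x => d (pi x)].

Lemma Phi_lin : linear Phi_f.
Proof. by move=> a u v; apply/ffunP => x; rewrite !ffunE. Qed.

Let Phi := linfun Phi_f.
Let PhiE d : Phi d = Phi_f d. Proof. exact: (@linfunE' k _ _ Phi_f Phi_lin). Qed.

Lemma Phi_inj : lker Phi == 0%VS.
Proof.
apply/lker0P => u v; rewrite !PhiE => E; apply/ffunP => A.
have := congr1 (fun f : {ffun T -> 'M[k]_(p, q)} => f (sg A)) E.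
by rewrite !ffunE H1.
Qed.

Lemma ext1_transport :
  ext1_dim mul rS rT = ext1_dim mul' (rS \o sg) (rT \o sg).
Proof.
rewrite /ext1_dim.
set D := linfun (der_defect mul rS rT).
set D' := linfun (der_defect mul' (rS \o sg) (rT \o sg)).
set I := linfun (inner_der rS rT).
set I' := linfun (inner_der (rS \o sg) (rT \o sg)).
have dimE (U : {vspace _}) : \dim (Phi @: U)%VS = \dim U.
  by apply: limg_dim_eq; rewrite (eqP Phi_inj) capv0.
have E1 : (Phi @: lker D')%VS = lker D.
  apply/eqP; rewrite eqEsubv; apply/andP; split; apply/subvP => d.
  - move=> /memv_imgP[d' /in_lkerP Hd' ->]; apply/in_lkerP => a b.
    rewrite PhiE !ffunE -H2 Hd' /= !HS !HT.
    by [].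
  - move=> /in_lkerP Hd; apply/memv_imgP.
    exists [ffun A => d (sg A)].
      apply/in_lkerP => A B; rewrite !ffunE /=.
      rewrite -{1}(H1 A) -{1}(H1 B) H2 HD //.
    apply/ffunP => x; rewrite PhiE !ffunE HD //.
have E2 : (Phi @: limg I')%VS = limg I.
  rewrite -limg_comp; congr (_ @: _)%VS.
  apply/lfunP => f; rewrite comp_lfunE PhiE /I /I' !linfunE'; try exact: id_lin.
  by apply/ffunP => x; rewrite !ffunE /= HS HT.
by rewrite -E1 -E2 !dimE.
Qed.

End Transport.

Section Cong.
Variables (M : finType) (mul : M -> M -> M) (one : M).

Lemma congrP (K : {set M * M}) : reflect
  [/\ forall x, (x, x) \in K,
      forall x y, (x, y) \in K -> (y, x) \in K,
      forall x y z, (x, y) \in K -> (y, z) \in K -> (x, z) \in K &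
      forall x y z, (x, y) \in K -> ((mul z x, mul z y) \in K) && ((mul x z, mul y z) \in K)]
  (is_congr mul K).
Proof.
apply: (iffP and4P) => [[/forallP r /forallP s /forallP t /forallP c]|[r s t c]].
  split.
  - exact: r.
  - by move=> x y; move: (s x) => /forallP/(_ y)/implyP; apply.
  - move=> x y z H1 H2; move: (t x) => /forallP/(_ y)/forallP/(_ z)/implyP; apply.
    by rewrite H1 H2.
  - by move=> x y z; move: (c x) => /forallP/(_ y)/forallP/(_ z)/implyP; apply.
split; apply/forallP => x //.
- by apply/forallP => y; apply/implyP; exact: s.
- apply/forallP => y; apply/forallP => z; apply/implyP => /andP[]; exact: t.
- apply/forallP => y; apply/forallP => z; apply/implyP; exact: c.
Qed.

Variable R : {set M * M}.

Lemma cg_min (K : {set M * M}) : is_congr mul K -> R \subset K -> congr_gen mul R \subset K.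
Proof. move=> HK HR; apply/subsetP => x /bigcapP; apply; by rewrite HK HR. Qed.

Lemma cg_congr : is_congr mul (congr_gen mul R).
Proof.
apply/congrP; rewrite /congr_gen; split.
- move=> x; apply/bigcapP => K /andP[/congrP[r _ _ _] _]; exact: r.
- move=> x y /bigcapP H; apply/bigcapP => K HK.
  have := H K HK; case/andP: HK => /congrP[_ s _ _] _; exact: s.
- move=> x y z /bigcapP H1 /bigcapP H2; apply/bigcapP => K HK.
  have := H1 K HK; have := H2 K HK; case/andP: HK => /congrP[_ _ t _] _ a b; exact: t b a.
- move=> x y z /bigcapP H; apply/andP; split; apply/bigcapP => K HK;
  have := H K HK; case/andP: HK => /congrP[_ _ _ c] _ H'; by have /andP[] := c _ _ z H'.
Qed.

Let C := congr_gen mul R.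
Let refl x : (x, x) \in C. Proof. by case/congrP: cg_congr. Qed.
Let sym x y : (x, y) \in C -> (y, x) \in C. Proof. by case/congrP: cg_congr => _ s _ _; exact: s. Qed.
Let trans x y z : (x, y) \in C -> (y, z) \in C -> (x, z) \in C.
Proof. by case/congrP: cg_congr => _ _ t _; exact: t. Qed.
Let compat x y z : (x, y) \in C -> ((mul z x, mul z y) \in C) && ((mul x z, mul y z) \in C).
Proof. by case/congrP: cg_congr => _ _ _ c; exact: c. Qed.

Lemma cls_eq x y : (x, y) \in C -> cls C x = cls C y.
Proof.
move=> H; apply/setP => z; rewrite !inE; apply/idP/idP => H'.
  by apply: trans (sym H) H'.
by apply: trans H H'.
Qed.

Lemma qmk_eq x y : (x, y) \in C -> qmk C x = qmk C y.
Proof. by move=> H; apply: val_inj => /=; exact: cls_eq. Qed.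

Lemma qrepr_in A : exists x, val A = cls C x /\ (x, qrepr one C A) \in C.
Proof.
case: A => S HS /=; have /imsetP[x _ Ex] := HS; exists x; split => //.
rewrite /qrepr /=; case: pickP => [y|H]; first by rewrite Ex inE.
by move: (H x); rewrite Ex inE refl.
Qed.

Lemma qH1 A : qmk C (qrepr one C A) = A.
Proof.
have [x [Ex Hx]] := qrepr_in A.
apply: val_inj; rewrite /= Ex; apply: esym; exact: cls_eq.
Qed.

Lemma qsp x : (x, qrepr one C (qmk C x)) \in C.
Proof.
have [y [/= Ey Hy]] := qrepr_in (qmk C x).
have : y \in cls C x by rewrite Ey inE refl.
rewrite inE => Hxy; exact: trans Hxy Hy.
Qed.

Lemma qH2 a b : qmul mul one C (qmk C a) (qmk C b) = qmk C (mul a b).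
Proof.
rewrite /qmul; apply: qmk_eq; apply: sym.
have /andP[_ h1] := compat b (qsp a).
have /andP[h2 _] := compat (qrepr one C (qmk C a)) (qsp b).
exact: trans h1 h2.
Qed.

End Cong.

Section KD.
Variables (k : fieldType) (T : finType) (mul : T -> T -> T) (one : T) (p q : nat)
  (rS : T -> 'M[k]_q) (rT : T -> 'M[k]_p).
Hypothesis HmS : forall a b, rS (mul a b) = rS a *m rS b.
Hypothesis HmT : forall a b, rT (mul a b) = rT a *m rT b.
Variable d : {ffun T -> 'M[k]_(p, q)}.
Hypothesis Hd : isder mul rS rT d.

Definition Kd := [set xy : T * T | [&& rS xy.1 == rS xy.2, rT xy.1 == rT xy.2 & d xy.1 == d xy.2]].

Lemma Kd_congr : is_congr mul Kd.
Proof.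
apply/congrP; split.
- by move=> x; rewrite inE !eqxx.
- by move=> x y; rewrite !inE /= => /and3P[/eqP-> /eqP-> /eqP->]; rewrite !eqxx.
- by move=> x y z; rewrite !inE /= => /and3P[/eqP-> /eqP-> /eqP->].
- move=> x y z; rewrite !inE /= => /and3P[/eqP e1 /eqP e2 /eqP e3].
  by rewrite !Hd !HmS !HmT e1 e2 e3 !eqxx.
Qed.

Variable R : {set T * T}.
Hypothesis HR : R \subset Kd.

Lemma Kd_const x :
  let y := qrepr one (congr_gen mul R) (qmk (congr_gen mul R) x) in
  [/\ rS y = rS x, rT y = rT x & d y = d x].
Proof.
have := subsetP (cg_min Kd_congr HR) _ (@qsp _ mul one R x).
by rewrite inE /= => /and3P[/eqP-> /eqP-> /eqP->].
Qed.

End KD.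

Lemma isder0 (k : fieldType) (T : finType) (mul : T -> T -> T) (p q : nat)
  (rS : T -> 'M[k]_q) (rT : T -> 'M[k]_p) : isder mul rS rT 0.
Proof. by move=> a b; rewrite !ffunE mulmx0 mul0mx addr0. Qed.

Theorem mainTheorem12 (M : finType) (mul : M -> M -> M) (one : M) (k : fieldType)
  (Hmon : is_monoid mul one) (Hrect : rectangular mul)
  (Hsplit : splits mul one k)
  (eX eY : M) (HeX : idem mul eX) (HeY : idem mul eY)
  (HXY : ideal mul eX \subset ideal mul eY)
  (p q : nat) (rU : M -> 'M[k]_p) (rV : M -> 'M[k]_q)
  (HU : is_grep mul eX rU) (HUirr : grep_irr mul eX rU)
  (HV : is_grep mul eY rV) (HVirr : grep_irr mul eY rV) :
  let U := infl mul one eX rU in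
  let V := infl mul one eY rV in
  ext1_dim mul U V
    = ext1_dim (qmul mul one (Cl mul)) (U \o qrepr one (Cl mul))
                                       (V \o qrepr one (Cl mul))
  /\ ext1_dim mul V U
    = ext1_dim (qmul mul one (Cr mul)) (V \o qrepr one (Cr mul))
                                       (U \o qrepr one (Cr mul)).
Proof.
move=> U V.
have mU : forall a b, U (mul a b) = U a *m U b := infl_mul Hmon Hrect HeX HU.
have mV : forall a b, V (mul a b) = V a *m V b := infl_mul Hmon Hrect HeY HV.
have idU a : mul a a = a -> U a = if eX \in ideal mul a then 1%:M else 0.
  by move=> H; apply: (@infl_idem _ mul one Hmon Hrect eX HeX k p rU a HU H).
have idV a : mul a a = a -> V a = if eY \in ideal mul a then 1%:M else 0.
  by move=> H; apply: (@infl_idem _ mul one Hmon Hrect eY HeY k q rV a HV H).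
have XY a : eY \in ideal mul a -> eX \in ideal mul a.
  move=> H; apply: (inI_trans Hmon _ H).
  by move/subsetP: HXY; apply; exact: inI_refl Hmon _.
have mid a x b : mul (mul a x) b \in ideal mul x := inI_mid mul a x b.
split.
-
  have HR d : isder mul U V d -> rz_pairs mul \subset Kd U V d.
    move=> Hd; apply/subsetP => [[a b]]; rewrite inE /= => /and3P[_ /eqP ab /eqP ba].
    have aa : mul a a = a by rewrite -{2}ba (mA Hmon) ab ba.
    have bb : mul b b = b by rewrite -{2}ab (mA Hmon) ba ab.
    have Iab : ideal mul a = ideal mul b.
      apply/(eqI Hmon); split.
        by apply/inIP; exists one, a; rewrite (m1l Hmon) ba.
      by apply/inIP; exists one, b; rewrite (m1l Hmon) ab.
    rewrite inE /= (idU a aa) (idU b bb) (idV a aa) (idV b bb) Iab !eqxx /=.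
    case cX : (eX \in ideal mul b).
    + have E1 := Hd a b; have E4 := Hd b b.
      rewrite ab (idU b bb) cX mulmx1 (idV a aa) Iab -(idV b bb) in E1.
      rewrite bb (idU b bb) cX mulmx1 in E4.
      by apply/eqP; apply: (addrI (V b *m d b)); rewrite -E1 -E4.
    + have cY : (eY \in ideal mul b) = false.
        by apply/negbTE; apply/negP => /XY; rewrite cX.
      have E1 := Hd a b; have E2 := Hd b a.
      rewrite ab (idU b bb) cX (idV a aa) Iab cY mulmx0 mul0mx addr0 in E1.
      rewrite ba (idU a aa) Iab cX (idV b bb) cY mulmx0 mul0mx addr0 in E2.
      by rewrite E1 E2.
  rewrite /Cl; apply: ext1_transport.
  + exact: qH1.
  + exact: qH2.
  + by move=> x; have [] := Kd_const one mU mV (isder0 _ _ _) (HR _ (isder0 _ _ _)) x.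
  + by move=> x; have [] := Kd_const one mU mV (isder0 _ _ _) (HR _ (isder0 _ _ _)) x.
  + by move=> d Hd x; have [] := Kd_const one mU mV Hd (HR _ Hd) x.
-
  have HR d : isder mul V U d -> lz_pairs mul \subset Kd V U d.
    move=> Hd; apply/subsetP => [[a b]]; rewrite inE /= => /and3P[_ /eqP ab /eqP ba].
    have aa : mul a a = a by rewrite -{1}ab -(mA Hmon) ba.
    have bb : mul b b = b by rewrite -{1}ba -(mA Hmon) ab.
    have Iab : ideal mul a = ideal mul b.
      apply/(eqI Hmon); split.
        by apply/inIP; exists a, one; rewrite (m1r Hmon) ab.
      by apply/inIP; exists b, one; rewrite (m1r Hmon) ba.
    rewrite inE /= (idU a aa) (idU b bb) (idV a aa) (idV b bb) Iab !eqxx /=.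
    case cX : (eX \in ideal mul b).
    + have E1 := Hd a b; have E3 := Hd a a.
      rewrite ab (idU a aa) Iab cX mul1mx in E1.
      rewrite aa (idU a aa) Iab cX mul1mx (idV a aa) Iab -(idV b bb) in E3.
      by apply/eqP; apply: (addIr (d a *m V b)); rewrite -E1 -E3.
    + have cY : (eY \in ideal mul b) = false.
        by apply/negbTE; apply/negP => /XY; rewrite cX.
      have E1 := Hd a b; have E2 := Hd b a.
      rewrite ab (idU a aa) Iab cX (idV b bb) cY mulmx0 mul0mx addr0 in E1.
      rewrite ba (idU b bb) cX (idV a aa) Iab cY mulmx0 mul0mx addr0 in E2.
      by rewrite E1 E2.
  rewrite /Cr; apply: ext1_transport.
  + exact: qH1.
  + exact: qH2.
  + by move=> x; have [] := Kd_const one mV mU (isder0 _ _ _) (HR _ (isder0 _ _ _)) x.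
  + by move=> x; have [] := Kd_const one mV mU (isder0 _ _ _) (HR _ (isder0 _ _ _)) x.
  + by move=> d Hd x; have [] := Kd_const one mV mU Hd (HR _ Hd) x.
Qed.
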